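(* Let $\mathcal{A}\subseteq\mathcal{B}$ be sub-$\sigma$-algebras of a complete probability space $(\Omega,\mathcal{F},P)$. If $x:L_\infty(\mathcal{B})\to L_\infty(\mathcal{A})$ is a weak $\mathcal{A}$-homogeneous monotone linear operator that is continuous from above, then $x$ is $\mathcal{A}$-homogeneous.
   Context: Weak $\mathcal{A}$-homogeneous: $x(1_AX)=1_Ax(X)$ for all $A\in\mathcal{A}$, $X\in L_\infty(\mathcal{B})$. $\mathcal{A}$-homogeneous: $x(fX)=fx(X)$ for all $f\in L^+_\infty(\mathcal{A})$. Continuous from above: for every nonincreasing sequence $X_n$ with a.s. limit $X$, $x(X_n)\downarrow x(X)$ a.s. *)

(* Defs.v *)
From HB Require Import structures.
From mathcomp Require Import all_boot all_order all_algebra.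
From mathcomp Require Import all_classical all_reals all_analysis.
Set Implicit Arguments. Unset Strict Implicit. Unset Printing Implicit Defensive.
Import Order.TTheory GRing.Theory Num.Theory.
Import numFieldNormedType.Exports.
Local Open Scope classical_set_scope.
Local Open Scope ring_scope.

Section Linf.
Context (d : measure_display) (T : measurableType d) (R : realType).

Definition is_sub_sigma (G : set (set T)) : Prop :=
  sigma_algebra setT G /\ (forall A, G A -> measurable A).

Definition measurable_wrt (G : set (set T)) (f : T -> R) : Prop :=
  forall B : set R, measurable B -> G (f @^-1` B).

(* representatives of elements of L_infty(G) (w.r.t. P-a.s. equality) *)
Definition Linf (P : probability T R) (G : set (set T)) (f : T -> R) : Prop :=
  measurable_wrt G f /\ exists M : R, {ae P, forall w, `|f w| <= M}.

Definition Linf_pos (P : probability T R) (G : set (set T)) (f : T -> R) : Prop :=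
  Linf P G f /\ {ae P, forall w, 0 <= f w}.

Definition ind (A : set T) : T -> R := fun w => (\1_A w : R).

End Linf.

(* Main.v *)
Require Import Defs.
From HB Require Import structures.
From mathcomp Require Import all_boot all_order all_algebra.
From mathcomp Require Import all_classical all_reals all_analysis.
From mathcomp Require Import ring lra.
Import Order.TTheory GRing.Theory Num.Theory.
Import numFieldNormedType.Exports.
Local Open Scope classical_set_scope.
Local Open Scope ring_scope.

Section H.
Context (d : measure_display) (T : measurableType d) (R : realType).
Variable (P : probability T R).

Lemma mwrtE (G : set (set T)) (hG : sigma_algebra setT G) (f : T -> R) :
  measurable_wrt G f <-> measurable_fun (setT : set (g_sigma_algebraType G)) f.
Proof.
have E : <<s G >> = G by exact: sigma_algebra_id.
split => [h _ B mB | h B mB].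
  change (<<s G >> (setT `&` f @^-1` B)); rewrite E setTI; exact: h.
have := h measurableT B mB; change (<<s G >> (setT `&` f @^-1` B) -> G (f @^-1` B)).
by rewrite E setTI.
Qed.

Lemma Linf_cst G (hG : sigma_algebra setT G) (c : R) : Linf P G (fun _ => c).
Proof.
split; first by apply/mwrtE => //; exact: measurable_cst.
by exists `|c|; apply: aeW => w.
Qed.

Lemma Linf_add G (hG : sigma_algebra setT G) f g : Linf P G f -> Linf P G g ->
  Linf P G (fun v => f v + g v).
Proof.
move=> [mf [M1 h1]] [mg [M2 h2]]; split.
  apply/mwrtE => //; apply: measurable_realfun.measurable_funD; exact/mwrtE.
exists (M1 + M2); apply: filterS2 h1 h2 => w h1 h2.
by rewrite (le_trans (ler_normD _ _))// lerD.
Qed.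

Lemma Linf_mul G (hG : sigma_algebra setT G) f g : Linf P G f -> Linf P G g ->
  Linf P G (fun v => f v * g v).
Proof.
move=> [mf [M1 h1]] [mg [M2 h2]]; split.
  apply/mwrtE => //; apply: measurable_realfun.measurable_funM; exact/mwrtE.
exists (M1 * M2); apply: filterS2 h1 h2 => w h1 h2.
by rewrite normrM ler_pM.
Qed.

Lemma Linf_ind G (hG : sigma_algebra setT G) A : G A -> Linf P G (ind R A).
Proof.
move=> GA; split.
  apply/mwrtE => //; apply: (@measurable_realfun.measurable_indic _ (g_sigma_algebraType G)).
  by change (<<s G >> A); rewrite sigma_algebra_id.
exists 1; apply: aeW => w; rewrite /ind /indic; case: (_ \in _) => /=;
  by rewrite ?normr1 ?normr0.
Qed.

Lemma key (m k f X M : R) : 0 < m -> k / m <= f < (k + 1) / m -> `|X| <= M ->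
  f * X <= k / m * X + M / m * 1 /\ k / m * X + (- (M / m)) * 1 <= f * X.
Proof.
move=> m0 /andP[h1 h2] hX.
have [hX1 hX2] : - M <= X /\ X <= M by move: hX; rewrite ler_norml => /andP[].
rewrite !mulr1; move: h1 h2; rewrite mulrDl mul1r => h1 h2.
set i := m^-1 in h1 h2 *.
have mi : m * i = 1 by rewrite mulfV ?gt_eqF.
have i0 : 0 < i by rewrite invr_gt0.
set u := f - k * i.
have u0 : 0 <= u by rewrite subr_ge0.
have u1 : u <= i by rewrite lerBlDl ltW.
have -> : f * X = u * X + k * i * X by rewrite /u; ring.
have M0 : 0 <= M by lra.
have p1 : 0 <= u * (M - X) by apply: mulr_ge0; lra.
have p2 : 0 <= u * (M + X) by apply: mulr_ge0; lra.
have p3 : 0 <= (i - u) * M by apply: mulr_ge0; lra.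
split; lra.
Qed.

Lemma fin (m k f a b one M K N : R) : 0 < m -> k / m <= f < (k + 1) / m ->
  a <= k / m * b + M / m * one -> k / m * b + (- (M / m)) * one <= a ->
  `|one| <= K -> `|b| <= N -> 0 <= M -> m * `|a - f * b| <= M * K + N.
Proof.
move=> m0 /andP[h1 h2] ha1 ha2 ho hb M0.
have [ho1 ho2] : - K <= one /\ one <= K by move: ho; rewrite ler_norml => /andP[].
have [b1 b2] : - N <= b /\ b <= N by move: hb; rewrite ler_norml => /andP[].
move: h1 h2 ha1 ha2; rewrite mulrDl mul1r => h1 h2 ha1 ha2.
set i := m^-1 in h1 h2 ha1 ha2 *.
have mi : m * i = 1 by rewrite mulfV ?gt_eqF.
have i0 : 0 < i by rewrite invr_gt0.
set u := f - k * i.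
have u0 : 0 <= u by rewrite subr_ge0.
have u1 : u <= i by rewrite lerBlDl ltW.
set v := a - k * i * b.
have v1 : v <= M * i * one by rewrite /v; lra.
have v2 : - (M * i * one) <= v by rewrite /v; lra.
have -> : a - f * b = v - u * b by rewrite /v /u; ring.
have p1 : 0 <= u * (N - b) by apply: mulr_ge0; lra.
have p2 : 0 <= u * (N + b) by apply: mulr_ge0; lra.
have p3 : 0 <= (i - u) * N by apply: mulr_ge0; lra.
have p4 : 0 <= M * (K - one) by apply: mulr_ge0; lra.
have p5 : 0 <= M * (K + one) by apply: mulr_ge0; lra.
have q1 : m * v <= M * one by have := ler_wpM2l (ltW m0) v1; rewrite !mulrA (mulrC m M) -(mulrA M m i) mi mulr1.
have q2 : - (M * one) <= m * v by have := ler_wpM2l (ltW m0) v2; rewrite mulrN !mulrA (mulrC m M) -(mulrA M m i) mi mulr1.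
have r3 : u * b <= i * N by lra.
have r4 : - (i * N) <= u * b by lra.
have q3 : m * (u * b) <= N.
  by move: r3 => /(ler_wpM2l (ltW m0)); rewrite [m * (i * N)]mulrA mi mul1r.
have q4 : - N <= m * (u * b).
  by move: r4 => /(ler_wpM2l (ltW m0)); rewrite [m * - _]mulrN [m * (i * N)]mulrA mi mul1r.
rewrite -(ger0_norm (ltW m0)) -normrM ler_norml mulrBr; apply/andP; split; lra.
Qed.

End H.
Arguments key {R m k f X M}.
Arguments fin {R m k f a b one M K N}.

Theorem lemma3p7 (d : measure_display) (T : measurableType d) (R : realType)
  (P : probability T R) (cP : measure_is_complete P)
  (sA sB : set (set T))
  (hA : is_sub_sigma sA) (hB : is_sub_sigma sB) (hAB : sA `<=` sB)
  (x : (T -> R) -> (T -> R))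
  (* x : L_infty(B) -> L_infty(A) *)
  (x_range : forall X, Linf P sB X -> Linf P sA (x X))
  (* linear *)
  (x_lin : forall (a b : R) X Y, Linf P sB X -> Linf P sB Y ->
     {ae P, forall w, x (fun v => a * X v + b * Y v) w = a * x X w + b * x Y w})
  (* monotone (on classes: a.s. order) *)
  (x_mono : forall X Y, Linf P sB X -> Linf P sB Y ->
     {ae P, forall w, X w <= Y w} -> {ae P, forall w, x X w <= x Y w})
  (* weak A-homogeneous *)
  (x_weak : forall (A : set T) X, sA A -> Linf P sB X ->
     {ae P, forall w, x (fun v => @ind _ _ R A v * X v) w = @ind _ _ R A w * x X w})
  (* continuous from above *)
  (x_cont : forall (Xn : nat -> T -> R) X,
     (forall n, Linf P sB (Xn n)) -> Linf P sB X ->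
     {ae P, forall w, forall n, Xn n.+1 w <= Xn n w} ->
     {ae P, forall w, Xn n w @[n --> \oo] --> X w} ->
     {ae P, forall w, (forall n, x (Xn n.+1) w <= x (Xn n) w) /\
                      x (Xn n) w @[n --> \oo] --> x X w}) :
  (* A-homogeneous *)
  forall (f X : T -> R), Linf_pos P sA f -> Linf P sB X ->
    {ae P, forall w, x (fun v => f v * X v) w = f w * x X w}.
Proof.
move=> f X [[mfA bf] f0] LX.
have sBs := hB.1.
have LfB : Linf P sB f.
  by split => // B mB; apply: hAB; exact: mfA.
have LfX : Linf P sB (fun v => f v * X v) by apply: Linf_mul.
have L1 : Linf P sB (fun _ => 1) by apply: Linf_cst.
have [_ [K hK]] := x_range _ L1.
have [_ [N hN]] := x_range _ LX.
have [_ [M hM]] := LX.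
have step : forall n k : nat, {ae P, forall w,
    (k%:R / n.+1%:R <= f w < (k%:R + 1) / n.+1%:R) ->
    x (fun v => f v * X v) w <= k%:R / n.+1%:R * x X w + M / n.+1%:R * x (fun _ => 1) w /\
    k%:R / n.+1%:R * x X w + (- (M / n.+1%:R)) * x (fun _ => 1) w <= x (fun v => f v * X v) w}.
  move=> n k.
  set m : R := n.+1%:R; set c := k%:R / m; set e := M / m.
  have m0 : 0 < m by rewrite /m ltr0Sn.
  pose A := f @^-1` [set` `[c, (k%:R + 1) / m[%R].
  have GA : sA A by apply: mfA; exact: measurable_itv.
  have LI : Linf P sB (ind R A) by apply: Linf_ind => //; exact: hAB.
  have Lup : Linf P sB (fun v => c * X v + e * 1).
    by apply: Linf_add => //; apply: Linf_mul => //; exact: Linf_cst.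
  have Llo : Linf P sB (fun v => c * X v + (- e) * 1).
    by apply: Linf_add => //; apply: Linf_mul => //; exact: Linf_cst.
  have Lg : Linf P sB (fun v => ind R A v * (f v * X v)) by apply: Linf_mul.
  have Lh : Linf P sB (fun v => ind R A v * (c * X v + e * 1)) by apply: Linf_mul.
  have Lh' : Linf P sB (fun v => ind R A v * (c * X v + (- e) * 1)) by apply: Linf_mul.
  have Wg : {ae P, forall w, x (fun v => ind R A v * (f v * X v)) w = ind R A w * x (fun v => f v * X v) w}
    := x_weak _ _ GA LfX.
  have Wh : {ae P, forall w, x (fun v => ind R A v * (c * X v + e * 1)) w = ind R A w * x (fun v => c * X v + e * 1) w}
    := x_weak _ _ GA Lup.
  have Wh' : {ae P, forall w, x (fun v => ind R A v * (c * X v + (- e) * 1)) w = ind R A w * x (fun v => c * X v + (- e) * 1) w}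
    := x_weak _ _ GA Llo.
  have Lin1 : {ae P, forall w, x (fun v => c * X v + e * 1) w = c * x X w + e * x (fun _ => 1) w}
    := x_lin c e _ _ LX L1.
  have Lin2 : {ae P, forall w, x (fun v => c * X v + (- e) * 1) w = c * x X w + (- e) * x (fun _ => 1) w}
    := x_lin c (- e) _ _ LX L1.
  have pt : {ae P, forall w, `|X w| <= M} := hM.
  have Mup : {ae P, forall w, x (fun v => ind R A v * (f v * X v)) w <= x (fun v => ind R A v * (c * X v + e * 1)) w}.
    apply: x_mono => //; apply: filterS pt => w hw.
    rewrite /ind indicE; case: (boolP (w \in A)) => [/set_mem|] Aw; last by rewrite !mul0r.
    rewrite !mul1r; have [] := key m0 Aw hw; done.
  have Mlo : {ae P, forall w, x (fun v => ind R A v * (c * X v + (- e) * 1)) w <= x (fun v => ind R A v * (f v * X v)) w}.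
    apply: x_mono => //; apply: filterS pt => w hw.
    rewrite /ind indicE; case: (boolP (w \in A)) => [/set_mem|] Aw; last by rewrite !mul0r.
    rewrite !mul1r; have [] := key m0 Aw hw; done.
  apply: filterS (filterI Mup (filterI Mlo (filterI Wg (filterI Wh (filterI Wh' (filterI Lin1 Lin2)))))).
  move=> w [a1 [a2 [a3 [a4 [a5 [a6 a7]]]]]] Aw.
  have Aw' : A w by rewrite /A /= in_itv /=.
  have i1 : ind R A w = 1 by rewrite /ind indicE mem_set.
  move: a1 a2; rewrite a3 a4 a5 a6 a7 i1 !mul1r.
  by move=> h1 h2; split.
have all := ae_foralln (fun n => ae_foralln (step n)).
apply: filterS (filterI all (filterI f0 (filterI hK (filterI hN hM)))).
move=> w [Hall [hf0 [hKw [hNw hMw]]]].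
have M0 : 0 <= M by exact: le_trans hMw.
set dd := x (fun v => f v * X v) w - f w * x X w.
have bnd : forall n : nat, n.+1%:R * `|dd| <= M * K + N.
  move=> n.
  set m : R := n.+1%:R.
  have m0 : 0 < m by rewrite /m ltr0Sn.
  set k := Num.truncn (m * f w).
  have /andP[k1 k2] := truncn_itv (mulr_ge0 (ltW m0) hf0).
  have kf : k%:R / m <= f w < (k%:R + 1) / m.
    apply/andP; split; first by rewrite ler_pdivrMr // mulrC.
    by rewrite ltr_pdivlMr // mulrC; move: k2; rewrite -natr1.
  have [h1 h2] := Hall n k kf.
  exact: fin m0 kf h1 h2 hKw hNw M0.
apply/eqP; rewrite -subr_eq0 -/dd -normr_eq0; apply/negPn/negP => dd0.
have dp : 0 < `|dd| by rewrite lt_neqAle eq_sym dd0 normr_ge0.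
have C0 : 0 <= (M * K + N) / `|dd|.
  rewrite divr_ge0 //; apply: addr_ge0; last exact: le_trans hNw.
  apply: mulr_ge0 => //; exact: le_trans hKw.
have := archi_boundP C0.
set b := Num.bound _.
rewrite ltr_pdivrMr // => hb.
have := bnd b; rewrite leNgt => /negP; apply.
apply: lt_le_trans hb _; apply: ler_wpM2r; first exact: ltW.
by rewrite ler_nat.
Qed.
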